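(* Let $[a,b]$ be an interval of length $\ell=b-a+1$ on which the offline optimal takes the form of Structure 1 or Structure 2, and assume $\bar y_{a\to b}:=\frac1\ell\sum_{j=a}^b y_j\in[-B,B]$. Then the predictions $x_j$ of FLH-OGD satisfy $$\sum_{j=a}^b (y_j-x_j)^2-(y_j-u_j)^2\le 10(B+G)^2\log n-\frac{4\lambda^2}{\ell}.$$
   Context: Squared loss game: $n\ge 3$, $B\ge 1$, $G\ge B$; for $t=1,\dots,n$ the learner predicts $x_t\in[-B,B]$, then the adversary reveals $y_t\in[-G,G]$. $[a,b]=\{a,\dots,b\}$. FLH-OGD: For each $j\in[n]$ a base learner $E^j$ is started at time $j$; it runs projected online gradient descent on $[-B,B]$ on the losses $x\mapsto (y_t-x)^2$, $t\ge j$: its first prediction $x^{(j)}_j$ is a fixed point of $[-B,B]$, and $x^{(j)}_{t+1}=\Pi\big(x^{(j)}_t-\tfrac{1}{2\tau}\cdot 2(x^{(j)}_t-y_t)\big)$ with $\tau=t-j+1$, $\Pi$ the projection onto $[-B,B]$. The FLH meta-algorithm with learning rate $\zeta$ keeps a probability vector $v_t=(v_t^{(1)},\dots,v_t^{(t)})$, $v_1=(1)$; it predicts $x_t=\sum_{j\le t}v_t^{(j)}x^{(j)}_t$; after $y_t$ is revealed it sets $\hat v^{(i)}_{t+1}=v_t^{(i)}e^{-\zeta(y_t-x_t^{(i)})^2}/\sum_{j\le t}v_t^{(j)}e^{-\zeta(y_t-x_t^{(j)})^2}$ for $i\le t$, then $v^{(t+1)}_{t+1}=1/(t+1)$ and $v^{(i)}_{t+1}=(1-\tfrac1{t+1})\hat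 v^{(i)}_{t+1}$. FLH-OGD uses $\zeta=1/(2(G+B)^2)$. Offline optimal: given $C_n>0$, $u_1,\dots,u_n$ is an optimal solution of: minimize $\frac12\sum_{t=1}^n(y_t-\tilde u_t)^2$ subject to $\sum_{t=2}^{n}|\tilde u_t-\tilde u_{t-1}|\le C_n$ and $-B\le\tilde u_t\le B$; with optimal dual variables $\lambda\ge0$ (TV constraint) and $\gamma^\pm_t\ge0$ (box constraints) satisfying the KKT conditions: there are $s_t\in[-1,1]$ with $s_t=\mathrm{sign}(u_{t+1}-u_t)$ whenever $u_{t+1}\ne u_t$, $s_0=s_n=0$, $u_t-y_t=\lambda(s_t-s_{t-1})+\gamma_t^--\gamma_t^+$, and $\lambda(\sum_{t=2}^n|u_t-u_{t-1}|-C_n)=0$, $\gamma_t^-(u_t+B)=0$, $\gamma_t^+(u_t-B)=0$. Structure 1 on $[a,b]\subseteq\{2,\dots,n-1\}$: $u_j=u_a\in(-B,B)$ for all $j\in[a,b]$, $u_b>u_{b+1}$ and $u_a>u_{a-1}$. Structure 2 on $[a,b]\subseteq\{2,\dots,n-1\}$: $u_j=u_a\in(-B,B)$ for all $j\in[a,b]$, $u_b<u_{b+1}$ and $u_a<u_{a-1}$. *)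

(* Defs.v *)
From Stdlib Require Import Reals Lra Lia List Bool.
Import ListNotations.
Open Scope R_scope.

(* sumR a b f = sum_{i=a}^{b} f i  (empty if b < a) *)
Definition sumR (a b : nat) (f : nat -> R) : R :=
  fold_right Rplus 0 (map f (seq a (S b - a))).

Definition proj (B z : R) : R := Rmax (- B) (Rmin B z).

(* Base learner E^j (projected OGD started at time j with first prediction
   init j).  base B y init j k = x^{(j)}_{j+k}; tau = k+1 at time t=j+k. *)
Fixpoint base (B : R) (y : nat -> R) (init : nat -> R) (j k : nat) : R :=
  match k with
  | O => init j
  | S k' =>
      let xp := base B y init j k' in
      proj B (xp - / (2 * INR (S k')) * (2 * (xp - y (j + k')%nat)))
  end.

Definition xb (B : R) (y init : nat -> R) (j t : nat) : R :=
  base B y init j (t - j).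

(* FLH weights v_t^{(j)}, t >= 1, j in [1,t]; zero outside. *)
Fixpoint flh_w (B zeta : R) (y init : nat -> R) (t : nat) : nat -> R :=
  match t with
  | O => fun _ => 0
  | S t' =>
      match t' with
      | O => fun j => if Nat.eqb j 1 then 1 else 0
      | S _ =>
          (* here t = t'+1 and t' >= 1; build v_{t'+1} from v_{t'} *)
          let v := flh_w B zeta y init t' in
          let Z := sumR 1 t'
                     (fun j => v j * exp (- zeta * (y t' - xb B y init j t') ^ 2)) in
          fun i =>
            if Nat.eqb i (S t') then / INR (S t')
            else if Nat.leb 1 i && Nat.leb i t' then
              (1 - / INR (S t')) *
              (v i * exp (- zeta * (y t' - xb B y init i t') ^ 2) / Z)
            else 0
      end
  end.

Definition flh_ogd (B G : R) (y init : nat -> R) (t : nat) : R :=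
  let zeta := / (2 * (G + B) ^ 2) in
  sumR 1 t (fun j => flh_w B zeta y init t j * xb B y init j t).

Definition TV (n : nat) (u : nat -> R) : R :=
  sumR 2 n (fun t => Rabs (u t - u (t - 1)%nat)).

Definition feasible (n : nat) (B Cn : R) (u : nat -> R) : Prop :=
  TV n u <= Cn /\ (forall t, (1 <= t <= n)%nat -> - B <= u t <= B).

Definition objective (n : nat) (y u : nat -> R) : R :=
  / 2 * sumR 1 n (fun t => (y t - u t) ^ 2).

Definition offline_optimal (n : nat) (B Cn : R) (y u : nat -> R) : Prop :=
  feasible n B Cn u /\
  forall w, feasible n B Cn w -> objective n y u <= objective n y w.

(* KKT conditions with dual variables lam (TV), gm/gp (box), and s_0..s_n *)
Definition KKT (n : nat) (B Cn : R) (y u : nat -> R)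
    (lam : R) (gm gp s : nat -> R) : Prop :=
  0 <= lam /\
  (forall t, (1 <= t <= n)%nat -> 0 <= gm t /\ 0 <= gp t) /\
  (forall t, (t <= n)%nat -> -1 <= s t <= 1) /\
  s 0%nat = 0 /\ s n = 0 /\
  (forall t, (1 <= t <= n - 1)%nat ->
     (u t < u (S t) -> s t = 1) /\ (u (S t) < u t -> s t = -1)) /\
  (forall t, (1 <= t <= n)%nat ->
     u t - y t = lam * (s t - s (t - 1)%nat) + gm t - gp t) /\
  lam * (TV n u - Cn) = 0 /\
  (forall t, (1 <= t <= n)%nat -> gm t * (u t + B) = 0 /\ gp t * (u t - B) = 0).

Definition structure1 (n : nat) (B : R) (u : nat -> R) (a b : nat) : Prop :=
  (2 <= a)%nat /\ (a <= b)%nat /\ (b <= n - 1)%nat /\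
  (forall j, (a <= j <= b)%nat -> u j = u a) /\
  - B < u a < B /\ u (S b) < u b /\ u (a - 1)%nat < u a.

Definition structure2 (n : nat) (B : R) (u : nat -> R) (a b : nat) : Prop :=
  (2 <= a)%nat /\ (a <= b)%nat /\ (b <= n - 1)%nat /\
  (forall j, (a <= j <= b)%nat -> u j = u a) /\
  - B < u a < B /\ u b < u (S b) /\ u a < u (a - 1)%nat.

(* Main.v *)
From Pilot Require Import Defs.
From Stdlib Require Import Reals Lra Lia Psatz List Bool.
From Coquelicot Require Import Coquelicot.
Import Pilot.Defs.
Open Scope R_scope.

Lemma h_dec (zeta y w1 w2 : R) : 0 < zeta -> w1 <= w2 ->
  2 * zeta * (y - w1) ^ 2 <= 1 -> 2 * zeta * (y - w2) ^ 2 <= 1 ->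
  2 * zeta * (y - w2) * exp (- zeta * (y - w2) ^ 2)
  <= 2 * zeta * (y - w1) * exp (- zeta * (y - w1) ^ 2).
Proof.
  intros Hz Hw H1 H2.
  destruct (Req_dec w1 w2) as [->|Hne]; [lra|].
  destruct (MVT_cor2 (fun w => 2 * zeta * (y - w) * exp (- zeta * (y - w) ^ 2))
    (fun w => 2 * zeta * exp (- zeta * (y - w) ^ 2) * (2 * zeta * (y - w) ^ 2 - 1))
    w1 w2) as [c [Hc1 Hc2]]; [lra| |].
  - intros c Hc. apply is_derive_Reals. auto_derive; [exact I|].
    replace (exp (- zeta * ((y + - c) * ((y + - c) * 1)))) with (exp (- zeta * (y - c) ^ 2)) by (f_equal; ring); ring.
  - assert (Hcc : 2 * zeta * (y - c) ^ 2 <= 1).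
    { destruct (Rle_dec 0 (y - c)).
      - assert ((y-c)^2 <= (y-w1)^2) by nra. nra.
      - assert ((y-c)^2 <= (y-w2)^2) by nra. nra. }
    assert (Hp := exp_pos (- zeta * (y - c) ^ 2)).
    assert (0 <= 2 * zeta * exp (- zeta * (y - c) ^ 2)) by nra.
    assert (2 * zeta * exp (- zeta * (y - c) ^ 2) * (2 * zeta * (y - c) ^ 2 - 1) * (w2 - w1) <= 0).
    { apply Rmult_le_0_r; [|lra]. apply Rmult_le_0_l; lra. }
    lra.
Qed.

Lemma tangent (zeta y x z : R) : 0 < zeta ->
  2 * zeta * (y - x) ^ 2 <= 1 -> 2 * zeta * (y - z) ^ 2 <= 1 ->
  exp (- zeta * (y - z) ^ 2) <=
  exp (- zeta * (y - x) ^ 2) + 2 * zeta * (y - x) * exp (- zeta * (y - x) ^ 2) * (z - x).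
Proof.
  intros Hz Hx Hzz.
  set (F := fun w => exp (- zeta * (y - w) ^ 2) -
     (exp (- zeta * (y - x) ^ 2) + 2 * zeta * (y - x) * exp (- zeta * (y - x) ^ 2) * (w - x))).
  set (F' := fun w => 2 * zeta * (y - w) * exp (- zeta * (y - w) ^ 2) -
                      2 * zeta * (y - x) * exp (- zeta * (y - x) ^ 2)).
  assert (HD : forall c, derivable_pt_lim F c (F' c)).
  { intros c. apply is_derive_Reals. unfold F, F'. auto_derive; [exact I|].
    replace (exp (- zeta * ((y + - c) * ((y + - c) * 1)))) with (exp (- zeta * (y - c) ^ 2)) by (f_equal; ring).
    replace (exp (- zeta * ((y - x) * ((y - x) * 1)))) with (exp (- zeta * (y - x) ^ 2)) by (f_equal; ring); ring. }
  assert (Fx : F x = 0) by (unfold F; ring).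
  assert (between : forall c, (Rmin x z <= c <= Rmax x z) -> 2 * zeta * (y - c) ^ 2 <= 1).
  { intros c [Hc1 Hc2]. unfold Rmin, Rmax in *.
    destruct (Rle_dec x z); destruct (Rle_dec 0 (y - c)).
    - assert ((y-c)^2 <= (y-x)^2) by nra. nra.
    - assert ((y-c)^2 <= (y-z)^2) by nra. nra.
    - assert ((y-c)^2 <= (y-z)^2) by nra. nra.
    - assert ((y-c)^2 <= (y-x)^2) by nra. nra. }
  enough (F z <= 0) by (unfold F in *; lra).
  destruct (Rtotal_order x z) as [Hlt|[Heq|Hgt]].
  - destruct (MVT_cor2 F F' x z Hlt (fun c _ => HD c)) as [c [E Hc]].
    assert (Hc' : 2 * zeta * (y - c) ^ 2 <= 1).
    { apply between. unfold Rmin, Rmax; destruct (Rle_dec x z); lra. }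
    assert (F' c <= 0).
    { unfold F'. assert (H := h_dec zeta y x c Hz ltac:(lra) Hx Hc'). lra. }
    assert (F' c * (z - x) <= 0) by (apply Rmult_le_0_r; lra). lra.
  - subst. lra.
  - destruct (MVT_cor2 F F' z x Hgt (fun c _ => HD c)) as [c [E Hc]].
    assert (Hc' : 2 * zeta * (y - c) ^ 2 <= 1).
    { apply between. unfold Rmin, Rmax; destruct (Rle_dec x z); lra. }
    assert (0 <= F' c).
    { unfold F'. assert (H := h_dec zeta y c x Hz ltac:(lra) Hc' Hx). lra. }
    assert (0 <= F' c * (x - z)) by (apply Rmult_le_pos; lra). lra.
Qed.

Definition LS (l : list nat) (f : nat -> R) := fold_right Rplus 0 (map f l).

Lemma LS_ext l f g : (forall i, In i l -> f i = g i) -> LS l f = LS l g.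
Proof. induction l; simpl; intros H; unfold LS in *; simpl; [reflexivity|].
  rewrite H by auto. f_equal. apply IHl; auto. Qed.
Lemma LS_le l f g : (forall i, In i l -> f i <= g i) -> LS l f <= LS l g.
Proof. induction l; simpl; intros H; unfold LS in *; simpl; [lra|].
  assert (f a <= g a) by auto. assert (fold_right Rplus 0 (map f l) <= fold_right Rplus 0 (map g l)) by (apply IHl; auto). lra. Qed.
Lemma LS_plus l f g : LS l (fun i => f i + g i) = LS l f + LS l g.
Proof. induction l; unfold LS in *; simpl; [ring|]. rewrite IHl. ring. Qed.
Lemma LS_scal l c f : LS l (fun i => c * f i) = c * LS l f.
Proof. induction l; unfold LS in *; simpl; [ring|]. rewrite IHl. ring. Qed.
Lemma LS_const l c : LS l (fun _ => c) = INR (length l) * c.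
Proof. induction l; unfold LS in *; [simpl; ring|]. simpl map. simpl fold_right. rewrite IHl. change (length (a :: l)) with (S (length l)).
  rewrite (S_INR (length l)). ring. Qed.
Lemma LS_nonneg_le l f i : (forall j, In j l -> 0 <= f j) -> In i l -> f i <= LS l f.
Proof. induction l; simpl; intros H Hi; [contradiction|]. unfold LS in *; simpl.
  assert (0 <= fold_right Rplus 0 (map f l)).
  { clear IHl Hi. induction l; simpl; [lra|]. assert (0 <= f a0) by (apply H; simpl; auto).
    assert (0 <= fold_right Rplus 0 (map f l)) by (apply IHl; intros; apply H; simpl in *; tauto). lra. }
  destruct Hi as [->|Hi]. assert (0 <= f i) by auto. lra.
  assert (f i <= fold_right Rplus 0 (map f l)) by (apply IHl; auto). assert (0 <= f a) by auto. lra. Qed.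

Lemma sumR_LS a b f : sumR a b f = LS (seq a (S b - a)) f.
Proof. reflexivity. Qed.

Lemma sumR_ext a b f g : (forall i, (a <= i <= b)%nat -> f i = g i) -> sumR a b f = sumR a b g.
Proof. intros H. rewrite !sumR_LS. apply LS_ext. intros i Hi. apply in_seq in Hi. apply H. lia. Qed.
Lemma sumR_le a b f g : (forall i, (a <= i <= b)%nat -> f i <= g i) -> sumR a b f <= sumR a b g.
Proof. intros H. rewrite !sumR_LS. apply LS_le. intros i Hi. apply in_seq in Hi. apply H. lia. Qed.
Lemma sumR_plus a b f g : sumR a b (fun i => f i + g i) = sumR a b f + sumR a b g.
Proof. apply LS_plus. Qed.
Lemma sumR_scal a b c f : sumR a b (fun i => c * f i) = c * sumR a b f.
Proof. apply LS_scal. Qed.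
Lemma sumR_const a b c : sumR a b (fun _ => c) = INR (S b - a) * c.
Proof. rewrite sumR_LS, LS_const, length_seq. reflexivity. Qed.
Lemma sumR_nonneg_le a b f i : (forall j, (a <= j <= b)%nat -> 0 <= f j) -> (a <= i <= b)%nat -> f i <= sumR a b f.
Proof. intros H Hi. rewrite sumR_LS. apply LS_nonneg_le.
  - intros j Hj. apply in_seq in Hj. apply H. lia.
  - apply in_seq. lia. Qed.
Lemma sumR_minus a b f g : sumR a b (fun i => f i - g i) = sumR a b f - sumR a b g.
Proof. rewrite <- (sumR_ext a b (fun i => f i + (-1) * g i)) by (intros; ring).
  rewrite sumR_plus, sumR_scal. ring. Qed.

Lemma fr_acc l x : fold_right Rplus x l = fold_right Rplus 0 l + x.
Proof. induction l; simpl; [ring|]. rewrite IHl; ring. Qed.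

Lemma sumR_S a b f : (a <= S b)%nat -> sumR a (S b) f = sumR a b f + f (S b).
Proof. intros H. unfold sumR.
  replace (S (S b) - a)%nat with (S (S b - a)) by lia.
  rewrite seq_S. replace (a + (S b - a))%nat with (S b) by lia.
  rewrite map_app, fold_right_app. cbn [map fold_right]. rewrite fr_acc. ring. Qed.
Lemma sumR_one a f : sumR a a f = f a.
Proof. unfold sumR. replace (S a - a)%nat with 1%nat by lia. simpl. ring. Qed.

Section W.
Variables (B zeta : R) (y init : nat -> R).
Let v := flh_w B zeta y init.
Definition Ef (t j : nat) := exp (- zeta * (y t - xb B y init j t) ^ 2).
Definition Zt (t : nat) := sumR 1 t (fun j => flh_w B zeta y init t j * Ef t j).

Lemma w_step t i : (1 <= t)%nat -> v (S t) i =
  if Nat.eqb i (S t) then / INR (S t)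
  else if Nat.leb 1 i && Nat.leb i t then (1 - / INR (S t)) * (v t i * Ef t i / Zt t) else 0.
Proof. intros H. destruct t; [lia|]. reflexivity. Qed.

Lemma w_props t : (1 <= t)%nat ->
  (forall i, 0 <= v t i) /\ (forall i, (1 <= i <= t)%nat -> 0 < v t i) /\ sumR 1 t (v t) = 1.
Proof.
  induction t as [|t IH]; intros Ht; [lia|].
  destruct (Nat.eq_dec t 0) as [->|Ht0].
  - unfold v; simpl flh_w. split; [|split].
    + intros i. destruct (Nat.eqb i 1); lra.
    + intros i Hi. replace i with 1%nat by lia. simpl. lra.
    + rewrite sumR_one. simpl. reflexivity.
  - destruct (IH ltac:(lia)) as [Hnn [Hpos Hsum]].
    assert (HE : forall j, 0 < Ef t j) by (intros; apply exp_pos).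
    assert (HZ : 0 < Zt t).
    { unfold Zt. apply Rlt_le_trans with (v t 1%nat * Ef t 1%nat).
      - apply Rmult_lt_0_compat; [apply Hpos; lia| apply HE].
      - apply (sumR_nonneg_le 1 t (fun j => v t j * Ef t j) 1%nat).
        + intros j _. apply Rmult_le_pos; [apply Hnn| left; apply HE].
        + lia. }
    assert (Hti : 0 < / INR (S t)) by (apply Rinv_0_lt_compat, lt_0_INR; lia).
    assert (Hti1 : / INR (S t) <= 1).
    { rewrite <- Rinv_1. apply Rinv_le_contravar; [lra|]. apply (le_INR 1). lia. }
    split; [|split].
    + intros i. rewrite w_step by lia.
      destruct (Nat.eqb i (S t)); [lra|].
      destruct (Nat.leb 1 i && Nat.leb i t); [|lra].
      apply Rmult_le_pos; [lra|]. unfold Rdiv. apply Rmult_le_pos; [|left; apply Rinv_0_lt_compat; lra].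
      apply Rmult_le_pos; [apply Hnn| left; apply HE].
    + intros i Hi. rewrite w_step by lia.
      destruct (Nat.eqb i (S t)) eqn:E1; [lra|].
      apply Nat.eqb_neq in E1.
      replace (Nat.leb 1 i && Nat.leb i t)%bool with true
        by (symmetry; apply andb_true_intro; split; apply Nat.leb_le; lia).
      assert (1 - / INR (S t) > 0).
      { assert (/ INR (S t) < 1); [|lra].
        rewrite <- Rinv_1. apply Rinv_lt_contravar; [rewrite Rmult_1_l; apply lt_0_INR; lia|]. apply (lt_INR 1). lia. }
      apply Rmult_lt_0_compat; [lra|]. unfold Rdiv. apply Rmult_lt_0_compat; [|apply Rinv_0_lt_compat; lra].
      apply Rmult_lt_0_compat; [apply Hpos; lia| apply HE].
    + rewrite sumR_S by lia.
      rewrite (sumR_ext 1 t _ (fun i => ((1 - / INR (S t)) * / Zt t) * (v t i * Ef t i))).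
      2:{ intros i Hi. rewrite w_step by lia.
          replace (Nat.eqb i (S t)) with false by (symmetry; apply Nat.eqb_neq; lia).
          replace (Nat.leb 1 i && Nat.leb i t)%bool with true
            by (symmetry; apply andb_true_intro; split; apply Nat.leb_le; lia).
          unfold Rdiv. ring. }
      rewrite sumR_scal. rewrite w_step by lia. rewrite Nat.eqb_refl.
      change (sumR 1 t (fun i => v t i * Ef t i)) with (Zt t). field. split; [apply not_0_INR; lia|lra].
Qed.

Lemma w_diag t : (1 <= t)%nat -> INR t * v t t = 1.
Proof. intros H. destruct t as [|t]; [lia|]. destruct t as [|t].
  - unfold v. simpl. ring.
  - rewrite w_step by lia. rewrite Nat.eqb_refl. field. apply not_0_INR. lia. Qed.

End W.

Lemma proj_bd B z : 0 <= B -> - B <= proj B z <= B.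
Proof. intros. unfold proj, Rmax, Rmin. destruct (Rle_dec B z); destruct (Rle_dec (-B) _); lra. Qed.

Lemma proj_contr B z c : - B <= c <= B -> (proj B z - c) ^ 2 <= (z - c) ^ 2.
Proof. intros. unfold proj, Rmax, Rmin. destruct (Rle_dec B z).
  - destruct (Rle_dec (-B) B); nra.
  - destruct (Rle_dec (-B) z); nra. Qed.

Lemma base_bd B y init j k : 0 <= B -> - B <= init j <= B -> - B <= base B y init j k <= B.
Proof. intros HB Hi. destruct k; simpl; [auto| apply proj_bd; auto]. Qed.

Lemma ln_le' x y : 0 < x -> x <= y -> ln x <= ln y.
Proof. intros H [H1|<-]; [left; apply ln_increasing; auto| right; reflexivity]. Qed.

Lemma ln_step m : / INR (S (S m)) <= ln (INR (S (S m))) - ln (INR (S m)).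
Proof.
  assert (H1 : 0 < INR (S m)) by (apply lt_0_INR; lia).
  assert (H2 : 0 < INR (S (S m))) by (apply lt_0_INR; lia).
  replace (ln (INR (S (S m))) - ln (INR (S m))) with (ln (INR (S (S m)) / INR (S m)))
    by (unfold Rdiv; rewrite ln_mult, ln_Rinv; [ring|lra|lra|apply Rinv_0_lt_compat; lra]).
  assert (Hq : 0 < INR (S (S m)) / INR (S m)) by (apply Rdiv_lt_0_compat; lra).
  rewrite <- (ln_exp (/ INR (S (S m)))).
  apply ln_le'; [apply exp_pos|].
  assert (Hx := exp_ineq1_le (- / INR (S (S m)))).
  assert (E : exp (- / INR (S (S m))) * exp (/ INR (S (S m))) = 1)
    by (rewrite <- exp_plus; replace (- / INR (S (S m)) + / INR (S (S m))) with 0 by ring; apply exp_0).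
  assert (HS : INR (S (S m)) = INR (S m) + 1) by (rewrite (S_INR (S m)); ring).
  assert (Hp := exp_pos (/ INR (S (S m)))).
  assert (1 - / INR (S (S m)) = INR (S m) / INR (S (S m))) by (rewrite HS; field; lra).
  apply Rmult_le_reg_r with (exp (- / INR (S (S m)))). apply exp_pos.
  rewrite Rmult_comm, E. unfold Rdiv in *.
  apply Rle_trans with (INR (S (S m)) * / INR (S m) * (1 - / INR (S (S m)))).
  - rewrite H. field_simplify; lra.
  - apply Rmult_le_compat_l; [|lra]. left; apply Rdiv_lt_0_compat; lra.
Qed.

Section OGD.
Variables (B L c : R) (y init : nat -> R) (a : nat).
Hypotheses (HB : 0 <= B) (Hi : - B <= init a <= B) (Hc : - B <= c <= B).
Let x k := base B y init a k.

Lemma ogd_step k : (y (a + k)%nat - x k) ^ 2 <= L ^ 2 ->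
  (y (a + k)%nat - x k) ^ 2 - (y (a + k)%nat - c) ^ 2 <=
  INR k * (x k - c) ^ 2 - INR (S k) * (x (S k) - c) ^ 2 + L ^ 2 / INR (S k).
Proof.
  intros HL.
  set (K := INR (S k)).
  assert (HK : 0 < K) by (apply lt_0_INR; lia).
  assert (Hk : INR k = K - 1) by (unfold K; rewrite S_INR; ring).
  set (z := x k - / (2 * K) * (2 * (x k - y (a + k)%nat))).
  assert (Ex : x (S k) = proj B z) by reflexivity.
  assert (Hp := proj_contr B z c Hc). rewrite <- Ex in Hp.
  assert (E : K * (z - c) ^ 2 = K * (x k - c) ^ 2 - 2 * (x k - c) * (x k - y (a+k)%nat)
                + (x k - y (a+k)%nat) ^ 2 / K) by (unfold z; field; lra).
  assert (K * (x (S k) - c) ^ 2 <= K * (z - c) ^ 2) by (apply Rmult_le_compat_l; lra).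
  assert ((L ^ 2 - (y (a + k)%nat - x k) ^ 2) / K >= 0).
  { unfold Rdiv. apply Rle_ge, Rmult_le_pos; [lra| left; apply Rinv_0_lt_compat; lra]. }
  rewrite Hk.
  assert (L ^ 2 / K = (y (a + k)%nat - x k) ^ 2 / K + (L ^ 2 - (y (a + k)%nat - x k) ^ 2) / K)
    by (field; lra).
  assert ((x k - y (a + k)%nat) ^ 2 = (y (a + k)%nat - x k) ^ 2) by ring.
  nra.
Qed.

Lemma ogd_regret m : (forall k, (k <= m)%nat -> (y (a + k)%nat - x k) ^ 2 <= L ^ 2) ->
  sumR a (a + m) (fun t => (y t - xb B y init a t) ^ 2 - (y t - c) ^ 2)
  + INR (S m) * (x (S m) - c) ^ 2 <= L ^ 2 * (1 + ln (INR (S m))).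
Proof.
  induction m as [|m IH]; intros HL.
  - rewrite Nat.add_0_r, sumR_one. unfold xb. rewrite Nat.sub_diag.
    assert (H := ogd_step 0 (HL 0%nat (le_n _))). rewrite Nat.add_0_r in H.
    simpl INR in *. rewrite ln_1. unfold x in *. lra.
  - rewrite Nat.add_succ_r, sumR_S by lia.
    unfold xb at 2. replace (S (a + m) - a)%nat with (S m) by lia.
    assert (H := ogd_step (S m) (HL (S m) (le_n _))). rewrite Nat.add_succ_r in H.
    assert (IH' := IH (fun k Hk => HL k ltac:(lia))).
    assert (Hl := ln_step m).
    assert (0 <= L ^ 2) by (apply pow2_ge_0).
    assert (L ^ 2 / INR (S (S m)) <= L ^ 2 * (ln (INR (S (S m))) - ln (INR (S m))))
      by (unfold Rdiv; apply Rmult_le_compat_l; lra).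
    unfold x in *. lra.
Qed.
End OGD.

Section FLH.
Variables (B G : R) (y init : nat -> R) (n : nat).
Hypotheses (HB : 1 <= B) (HG : B <= G)
  (Hy : forall t, (1 <= t <= n)%nat -> - G <= y t <= G)
  (Hi : forall j, (1 <= j <= n)%nat -> - B <= init j <= B).
Let zeta := / (2 * (G + B) ^ 2).
Let v := flh_w B zeta y init.

Lemma zeta_pos : 0 < zeta.
Proof. unfold zeta. apply Rinv_0_lt_compat. assert (0 < (G+B)^2) by (apply pow_lt; lra). lra. Qed.

Lemma zeta_ok d : - B - G <= d <= B + G -> 2 * zeta * d ^ 2 <= 1.
Proof. intros Hd. unfold zeta.
  assert (0 < (G+B)^2) by (apply pow_lt; lra).
  assert (d ^ 2 <= (G+B)^2) by nra.
  replace (2 * / (2 * (G + B) ^ 2) * d ^ 2) with (d ^ 2 / (G+B)^2) by (field; lra).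
  apply Rmult_le_reg_r with ((G+B)^2); [lra|]. unfold Rdiv. rewrite Rmult_assoc, Rinv_l; lra. Qed.

Lemma xb_bd j t : (1 <= j <= n)%nat -> - B <= xb B y init j t <= B.
Proof. intros. unfold xb. apply base_bd; [lra| apply Hi; auto]. Qed.

Lemma flh_eq t : flh_ogd B G y init t = sumR 1 t (fun j => v t j * xb B y init j t).
Proof. reflexivity. Qed.

Lemma mix t : (1 <= t <= n)%nat ->
  Zt B zeta y init t <= exp (- zeta * (y t - flh_ogd B G y init t) ^ 2).
Proof.
  intros Ht. rewrite flh_eq.
  destruct (w_props B zeta y init t ltac:(lia)) as [Hnn [_ Hsum]]. fold v in Hnn, Hsum.
  set (x := sumR 1 t (fun j => v t j * xb B y init j t)).
  assert (Hx : - B <= x <= B).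
  { split.
    - apply Rle_trans with (sumR 1 t (fun j => (-B) * v t j)).
      + rewrite sumR_scal, Hsum. lra.
      + apply sumR_le. intros i Hi'. assert (H := xb_bd i t ltac:(lia)). specialize (Hnn i). nra.
    - apply Rle_trans with (sumR 1 t (fun j => B * v t j)).
      + apply sumR_le. intros i Hi'. assert (H := xb_bd i t ltac:(lia)). specialize (Hnn i). nra.
      + rewrite sumR_scal, Hsum. lra. }
  assert (Hyt := Hy t Ht).
  set (E := exp (- zeta * (y t - x) ^ 2)).
  set (K := 2 * zeta * (y t - x) * E).
  unfold Zt.
  apply Rle_trans with (sumR 1 t (fun j => E * v t j + (K * (v t j * xb B y init j t) + (- K * x) * v t j))).
  - apply sumR_le. intros j Hj. fold v. unfold Ef.
    assert (H := tangent zeta (y t) x (xb B y init j t) zeta_pos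
      (zeta_ok (y t - x) ltac:(lra)) (zeta_ok (y t - xb B y init j t) ltac:(assert (H := xb_bd j t ltac:(lia)); lra))).
    specialize (Hnn j). fold E in H. fold K in H.
    assert (v t j * exp (- zeta * (y t - xb B y init j t) ^ 2) <= v t j * (E + K * (xb B y init j t - x)))
      by (apply Rmult_le_compat_l; auto).
    lra.
  - rewrite !sumR_plus, !sumR_scal, Hsum. fold x. lra.
Qed.

Lemma flh_step a t : (1 <= a <= t)%nat -> (t <= n)%nat ->
  exp (zeta * ((y t - flh_ogd B G y init t) ^ 2 - (y t - xb B y init a t) ^ 2)) * (INR t * v t a)
  <= INR (S t) * v (S t) a.
Proof.
  intros Ha Ht.
  destruct (w_props B zeta y init t ltac:(lia)) as [Hnn [Hpos _]]. fold v in Hnn, Hpos.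
  assert (HM := mix t ltac:(lia)).
  unfold v. rewrite w_step by lia. fold v.
  replace (Nat.eqb a (S t)) with false by (symmetry; apply Nat.eqb_neq; lia).
  replace (Nat.leb 1 a && Nat.leb a t)%bool with true
    by (symmetry; apply andb_true_intro; split; apply Nat.leb_le; lia).
  assert (HZ : 0 < Zt B zeta y init t).
  { unfold Zt. apply Rlt_le_trans with (v t a * Ef B zeta y init t a).
    - apply Rmult_lt_0_compat; [apply Hpos; lia| apply exp_pos].
    - apply (sumR_nonneg_le 1 t (fun j => v t j * Ef B zeta y init t j) a).
      + intros j _. apply Rmult_le_pos; [apply Hnn| left; apply exp_pos].
      + lia. }
  assert (HI : INR (S t) * (1 - / INR (S t)) = INR t)
    by (rewrite S_INR; field; assert (0 <= INR t) by apply pos_INR; lra).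
  set (Z := Zt B zeta y init t) in *.
  unfold Ef. set (la := (y t - xb B y init a t) ^ 2). set (lx := (y t - flh_ogd B G y init t) ^ 2) in *.
  assert (Hexp : exp (zeta * (lx - la)) * exp (- zeta * lx) = exp (- zeta * la))
    by (rewrite <- exp_plus; f_equal; ring).
  assert (HE : exp (zeta * (lx - la)) * Z <= exp (- zeta * la)).
  { rewrite <- Hexp. apply Rmult_le_compat_l; [left; apply exp_pos| exact HM]. }
  replace (INR (S t) * ((1 - / INR (S t)) * (v t a * exp (- zeta * la) / Z)))
    with ((INR t * v t a) * (exp (- zeta * la) / Z)) by (rewrite <- HI; unfold Rdiv; ring).
  rewrite Rmult_comm. apply Rmult_le_compat_l.
  - apply Rmult_le_pos; [apply pos_INR| apply Hnn].
  - apply Rmult_le_reg_r with Z; [lra|]. unfold Rdiv. rewrite Rmult_assoc, Rinv_l; lra.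
Qed.

Lemma flh_regret a b : (1 <= a <= b)%nat -> (b < n)%nat ->
  zeta * sumR a b (fun t => (y t - flh_ogd B G y init t) ^ 2 - (y t - xb B y init a t) ^ 2)
  <= ln (INR n).
Proof.
  intros Hab Hbn.
  set (r := fun t => (y t - flh_ogd B G y init t) ^ 2 - (y t - xb B y init a t) ^ 2).
  assert (Hind : forall m, (a + m <= b)%nat ->
     exp (zeta * sumR a (a + m) r) <= INR (S (a + m)) * v (S (a + m)) a).
  { induction m as [|m IH]; intros Hm.
    - rewrite Nat.add_0_r, sumR_one in *.
      assert (H := flh_step a a ltac:(lia) ltac:(lia)).
      assert (Hd := w_diag B zeta y init a ltac:(lia)). fold v in Hd. rewrite Hd in H. unfold r. lra.
    - rewrite Nat.add_succ_r, sumR_S by lia.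
      assert (H := flh_step a (S (a + m)) ltac:(lia) ltac:(lia)).
      assert (IH' := IH ltac:(lia)).
      rewrite Rmult_plus_distr_l, exp_plus.
      apply Rle_trans with (exp (zeta * r (S (a + m))) * (INR (S (a + m)) * v (S (a + m)) a)); [|exact H].
      rewrite (Rmult_comm (exp _)). apply Rmult_le_compat_l; [left; apply exp_pos|exact IH']. }
  assert (Hb := Hind (b - a)%nat ltac:(lia)). replace (a + (b - a))%nat with b in Hb by lia.
  destruct (w_props B zeta y init (S b) ltac:(lia)) as [Hnn [_ Hsum]]. fold v in Hnn, Hsum.
  assert (Hv : v (S b) a <= 1).
  { rewrite <- Hsum. apply (sumR_nonneg_le 1 (S b) (v (S b)) a); [intros; apply Hnn| lia]. }
  assert (HSb : INR (S b) <= INR n) by (apply le_INR; lia).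
  assert (0 < INR (S b)) by (apply lt_0_INR; lia).
  assert (exp (zeta * sumR a b r) <= INR n).
  { apply Rle_trans with (INR (S b) * v (S b) a); [exact Hb|].
    assert (INR (S b) * v (S b) a <= INR (S b) * 1) by (apply Rmult_le_compat_l; lra). lra. }
  rewrite <- (ln_exp (zeta * sumR a b r)). apply ln_le'; [apply exp_pos| assumption].
Qed.
End FLH.

Lemma telesc (s : nat -> R) a m : (1 <= a)%nat ->
  sumR a (a + m) (fun j => s j - s (j - 1)%nat) = s (a + m)%nat - s (a - 1)%nat.
Proof. intros Ha. induction m as [|m IH].
  - rewrite Nat.add_0_r, sumR_one. reflexivity.
  - rewrite Nat.add_succ_r, sumR_S by lia. rewrite IH.
    replace (S (a + m) - 1)%nat with (a + m)%nat by lia. ring. Qed.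

Theorem lemma5 (n : nat) (B G Cn : R) (y init u gm gp s : nat -> R) (lam : R)
  (a b : nat) :
  (3 <= n)%nat -> 1 <= B -> B <= G -> 0 < Cn ->
  (forall t, (1 <= t <= n)%nat -> - G <= y t <= G) ->
  (forall j, (1 <= j <= n)%nat -> - B <= init j <= B) ->
  offline_optimal n B Cn y u ->
  KKT n B Cn y u lam gm gp s ->
  (structure1 n B u a b \/ structure2 n B u a b) ->
  - B <= / INR (b - a + 1) * sumR a b y <= B ->
  sumR a b (fun j => (y j - flh_ogd B G y init j) ^ 2 - (y j - u j) ^ 2)
    <= 10 * (B + G) ^ 2 * ln (INR n) - 4 * lam ^ 2 / INR (b - a + 1).
Proof.
  intros Hn HB HG HCn Hy Hi _ HK Hst Hc.
  destruct HK as [Hlam [Hg [Hs [Hs0 [Hsn [Hsgn [Hstat [Hcs Hbox]]]]]]]].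
  assert (Hcommon : (2 <= a)%nat /\ (a <= b)%nat /\ (b <= n - 1)%nat /\
     (forall j, (a <= j <= b)%nat -> u j = u a) /\ - B < u a < B /\
     (u (S b) < u b /\ u (a - 1)%nat < u a /\ s b = -1 /\ s (a - 1)%nat = 1 \/
      u b < u (S b) /\ u a < u (a - 1)%nat /\ s b = 1 /\ s (a - 1)%nat = -1)).
  { destruct Hst as [[H1 [H2 [H3 [H4 [H5 [H6 H7]]]]]]|[H1 [H2 [H3 [H4 [H5 [H6 H7]]]]]]];
      refine (conj H1 (conj H2 (conj H3 (conj H4 (conj H5 _))))).
    - left. split; [auto|split; [auto|split]].
      + apply (proj2 (Hsgn b ltac:(lia))). auto.
      + apply (proj1 (Hsgn (a - 1)%nat ltac:(lia))). replace (S (a - 1)) with a by lia. auto.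
    - right. split; [auto|split; [auto|split]].
      + apply (proj1 (Hsgn b ltac:(lia))). auto.
      + apply (proj2 (Hsgn (a - 1)%nat ltac:(lia))). replace (S (a - 1)) with a by lia. auto. }
  destruct Hcommon as [Ha2 [Hab [Hbn [Hconst [Hua Hsig]]]]].
  set (l := INR (b - a + 1)).
  assert (Hl : 0 < l) by (apply lt_0_INR; lia).
  assert (HlS : INR (S b - a) = l) by (unfold l; f_equal; lia).
  set (c := / l * sumR a b y) in *.
  set (ua := u a).
  assert (HD : sumR a b (fun j => ua - y j) = lam * (s b - s (a - 1)%nat)).
  { rewrite (sumR_ext a b _ (fun j => lam * (s j - s (j - 1)%nat))).
    - rewrite sumR_scal. replace b with (a + (b - a))%nat at 1 by lia.
      rewrite telesc by lia. replace (a + (b - a))%nat with b by lia. reflexivity.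
    - intros j Hj. unfold ua. rewrite <- (Hconst j Hj).
      assert (Hj' : (1 <= j <= n)%nat) by lia.
      destruct (Hbox j Hj') as [Hm Hp]. rewrite (Hconst j Hj) in Hm, Hp.
      assert (gm j = 0) by (destruct (Rmult_integral _ _ Hm); [auto|lra]).
      assert (gp j = 0) by (destruct (Rmult_integral _ _ Hp); [auto|lra]).
      rewrite (Hstat j Hj'). lra. }
  rewrite sumR_minus, sumR_const, HlS in HD.
  assert (HDsq : (l * ua - sumR a b y) ^ 2 = 4 * lam ^ 2).
  { replace (l * ua) with (l * ua) by ring. destruct Hsig as [[_ [_ [E1 E2]]]|[_ [_ [E1 E2]]]];
      rewrite E1, E2 in HD; nra. }
  assert (Hcomp : sumR a b (fun j => (y j - u j) ^ 2) - sumR a b (fun j => (y j - c) ^ 2)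
                  = 4 * lam ^ 2 / l).
  { rewrite (sumR_ext a b (fun j => (y j - u j) ^ 2) (fun j => (y j - ua) ^ 2))
      by (intros j Hj; unfold ua; rewrite (Hconst j Hj); reflexivity).
    rewrite <- sumR_minus.
    rewrite (sumR_ext a b _ (fun j => (2 * (c - ua)) * y j + (- ((c - ua) * (ua + c))) * 1))
      by (intros; ring).
    rewrite sumR_plus, !sumR_scal, sumR_const, HlS.
    assert (Hlc : l * c = sumR a b y) by (unfold c; field; lra).
    replace (4 * lam ^ 2 / l) with ((l * ua - sumR a b y) ^ 2 / l) by (rewrite HDsq; reflexivity).
    rewrite <- Hlc. field. lra. }
  set (zeta := / (2 * (G + B) ^ 2)).
  assert (HL2 : 0 < (G + B) ^ 2) by (apply pow_lt; lra).
  assert (Hflh := flh_regret B G y init n HB HG Hy Hi a b ltac:(lia) ltac:(lia)).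
  fold zeta in Hflh.
  assert (Hflh' : sumR a b (fun t => (y t - flh_ogd B G y init t) ^ 2 - (y t - xb B y init a t) ^ 2)
                  <= 2 * (G + B) ^ 2 * ln (INR n)).
  { apply Rmult_le_reg_l with zeta; [apply (zeta_pos B G HB HG)|].
    replace (zeta * (2 * (G + B) ^ 2 * ln (INR n))) with (ln (INR n)) by (unfold zeta; field; lra).
    exact Hflh. }
  assert (HB0 : 0 <= B) by lra.
  assert (Hia := Hi a ltac:(lia)).
  assert (Hbd : forall k, (k <= b - a)%nat -> (y (a + k)%nat - base B y init a k) ^ 2 <= (G + B) ^ 2).
  { intros k Hk. assert (H1 := Hy (a + k)%nat ltac:(lia)).
    assert (H2 := base_bd B y init a k HB0 Hia). nra. }
  assert (Hogd := ogd_regret B (G + B) c y init a Hc (b - a) Hbd).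
  replace (a + (b - a))%nat with b in Hogd by lia.
  assert (Hpos : 0 <= INR (S (b - a)) * (base B y init a (S (b - a)) - c) ^ 2)
    by (apply Rmult_le_pos; [apply pos_INR| apply pow2_ge_0]).
  assert (Hln1 : ln (INR (S (b - a))) <= ln (INR n))
    by (apply ln_le'; [apply lt_0_INR; lia| apply le_INR; lia]).
  assert (Hlnn : 1 <= ln (INR n)).
  { rewrite <- (ln_exp 1). apply ln_le'; [apply exp_pos|].
    apply Rle_trans with 3; [apply exp_le_3|]. replace 3 with (INR 3) by (simpl; ring). apply le_INR. lia. }
  assert (Hsplit : sumR a b (fun j => (y j - flh_ogd B G y init j) ^ 2 - (y j - c) ^ 2)
     = sumR a b (fun t => (y t - flh_ogd B G y init t) ^ 2 - (y t - xb B y init a t) ^ 2)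
       + sumR a b (fun t => (y t - xb B y init a t) ^ 2 - (y t - c) ^ 2)).
  { rewrite <- sumR_plus. apply sumR_ext. intros; ring. }
  assert (Hfin : sumR a b (fun j => (y j - flh_ogd B G y init j) ^ 2 - (y j - c) ^ 2)
                 <= 10 * (B + G) ^ 2 * ln (INR n)).
  { rewrite Hsplit.
    assert ((G + B) ^ 2 * ln (INR (S (b - a))) <= (G + B) ^ 2 * ln (INR n))
      by (apply Rmult_le_compat_l; lra).
    replace ((B + G) ^ 2) with ((G + B) ^ 2) by ring. nra. }
  rewrite sumR_minus. rewrite sumR_minus in Hfin. lra.
Qed.
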